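(* Under the standing assumptions below, if $n\ge 1/\alpha-1$, then $\hat Q^{\mathrm{oracle}}_{1-\alpha}<\frac{n}{\sqrt{n+1}}$ almost surely.
   Context: Setting: $n\ge 2$, $d\ge 1$ integers, $\alpha\in(0,1)$, $[m]:=\{1,\dots,m\}$. $E^1,\dots,E^{n+1}$ are exchangeable random vectors in $\mathbb{R}^d$. Assumption A: for each $j\in[d]$, the distribution of $E^i_j$ has no point masses, $E^i_j\ge0$ a.s., $\mathbb{E}[E^i_j]<\infty$, $0<\mathrm{Var}(E^i_j)<\infty$, and $E^1_j,\dots,E^{n+1}_j$ are a.s. pairwise distinct. Quantile: for $x=(x_1,\dots,x_n)\in\mathbb{R}^n$, $\hat Q_{1-\alpha}(x)$ is the $\lceil(1-\alpha)(n+1)\rceil$-th smallest value of the multiset $\{x_1,\dots,x_n,+\infty\}$. Oracle statistics: $\hat\mu^{\mathrm{oracle}}_j=\frac1{n+1}\sum_{i=1}^{n+1}E^i_j$, $\hat\sigma^{\mathrm{oracle}}_j=\sqrt{\frac1n\sum_{i=1}^{n+1}(E^i_j-\hat\mu^{\mathrm{oracle}}_j)^2}$. $\Phi(t;\mu,\sigma):=\max_{1\le j\le d}\frac{t_j-\mu_j}{\sigma_j}$. $S^i_{\mathrm{oracle}}:=\Phi(E^i;\hat\mu^{\mathrm{oracle}},\hat\sigma^{\mathrm{oracle}})$, and $\hat Q^{\mathrm{oracle}}_{1-\alpha}:=\hat Q_{1-\alpha}(S^1_{\mathrm{oracle}},\dots,S^n_{\mathrm{oracle}})$. *)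

(* Defs.v *)
From HB Require Import structures.
From mathcomp Require Import all_boot all_order all_algebra all_fingroup.
From mathcomp Require Import all_classical all_reals all_analysis.
Set Implicit Arguments. Unset Strict Implicit. Unset Printing Implicit Defensive.
Import Order.TTheory GRing.Theory Num.Theory.
Local Open Scope classical_set_scope.
Local Open Scope ring_scope.

Section Defs.
Context {dT : measure_display} {T : measurableType dT} {R : realType}.

(* \hat Q_{1-alpha}(x): the ceil((1-alpha)(m+1))-th smallest element of the
   multiset {x_1,...,x_m, +oo} (values taken in the extended reals). *)
Definition conf_quantile (m : nat) (alpha : R) (x : 'I_m -> \bar R) : \bar R :=
  nth +oo%E (sort (fun a b : \bar R => (a <= b)%O) (rcons [seq x i | i <- enum 'I_m] +oo%E))
      (`|Num.ceil ((1 - alpha) * m.+1%:R)|%N - 1).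

Definition mu_oracle (n d : nat) (E : 'I_n.+1 -> 'I_d -> T -> R) (j : 'I_d) (w : T) : R :=
  n.+1%:R^-1 * \sum_(i < n.+1) E i j w.

Definition sigma_oracle (n d : nat) (E : 'I_n.+1 -> 'I_d -> T -> R) (j : 'I_d) (w : T) : R :=
  Num.sqrt (n%:R^-1 * \sum_(i < n.+1) (E i j w - mu_oracle E j w) ^+ 2).

(* Phi(t; mu, sigma) = max_j (t_j - mu_j)/sigma_j (finite when d >= 1) *)
Definition Phi (d : nat) (t mu sigma : 'I_d -> R) : \bar R :=
  \big[Order.max/-oo%E]_(j < d) ((t j - mu j) / sigma j)%:E.

(* S^i_oracle for i in [n] (calibration points are the first n indices) *)
Definition S_oracle (n d : nat) (E : 'I_n.+1 -> 'I_d -> T -> R) (i : 'I_n) (w : T) : \bar R :=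
  Phi (fun j => E (widen_ord (leqnSn n) i) j w) (fun j => mu_oracle E j w)
      (fun j => sigma_oracle E j w).

Definition Q_oracle (n d : nat) (alpha : R) (E : 'I_n.+1 -> 'I_d -> T -> R) (w : T) : \bar R :=
  conf_quantile alpha (fun i => S_oracle E i w).

End Defs.

(* Exchangeability of (E^1,...,E^{n+1}): for every permutation s of the indices,
   the joint law of (E^{s(i)})_i equals that of (E^i)_i, expressed on all
   measurable rectangles (which determine the joint law). *)
Definition exchangeable {dT : measure_display} {T : measurableType dT} {R : realType}
  (P : probability T R) (m d : nat) (E : 'I_m -> 'I_d -> T -> R) : Prop :=
  forall (s : {perm 'I_m}) (B : 'I_m -> 'I_d -> set R),
    (forall i j, measurable (B i j)) ->
    P (\bigcap_(i in [set: 'I_m]) \bigcap_(j in [set: 'I_d]) (E (s i) j @^-1` B i j))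
    = P (\bigcap_(i in [set: 'I_m]) \bigcap_(j in [set: 'I_d]) (E i j @^-1` B i j)).

(* Main.v *)
Require Import Defs.
From HB Require Import structures.
From mathcomp Require Import all_boot all_order all_algebra all_fingroup.
From mathcomp Require Import all_classical all_reals all_analysis.
From mathcomp Require Import ring lra.
Import Order.TTheory GRing.Theory Num.Theory.
Local Open Scope classical_set_scope.
Local Open Scope ring_scope.


Lemma key (R : rcfType) (n : nat) (a : 'I_n.+1 -> R) (k : 'I_n.+1) :
  (2 <= n)%N -> (forall i i', i != i' -> a i != a i') ->
  (a k - n.+1%:R^-1 * \sum_(i < n.+1) a i) /
    Num.sqrt (n%:R^-1 * \sum_(i < n.+1) (a i - n.+1%:R^-1 * \sum_(i < n.+1) a i) ^+ 2)
  < n%:R / Num.sqrt n.+1%:R.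
Proof.
move=> n2 inj.
set m := n.+1%:R^-1 * _.
set b := fun i => a i - m.
have n0 : n%:R != 0 :> R by rewrite pnatr_eq0 -lt0n (leq_trans _ n2).
have n10 : n.+1%:R != 0 :> R by rewrite pnatr_eq0.
have sb : \sum_i b i = 0.
  rewrite sumrB sumr_const card_ord -mulr_natl /m mulrA mulfV // mul1r subrr //.
set bk := b k.
have sbk : \sum_(i | i != k) b i = - bk.
  by move: sb; rewrite (bigD1 k) //=; move/eqP; rewrite addrC addr_eq0 => /eqP.
change (bk / Num.sqrt (n%:R^-1 * \sum_i b i ^+ 2) < n%:R / Num.sqrt n.+1%:R).
set S2 := \sum_(i | i != k) b i ^+ 2.
have sV : \sum_i b i ^+ 2 = bk ^+ 2 + S2 by rewrite (bigD1 k).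
have cardk : #|[pred i | i != k]| = n.
  by apply: etrans (_ : _ = #|predC1 k|) _; [exact: eq_card | rewrite cardC1 card_ord].
have id : \sum_(i | i != k) (b i + bk / n%:R) ^+ 2 = S2 - bk ^+ 2 / n%:R.
  under eq_bigr do rewrite sqrrD.
  rewrite !big_split /=.
  rewrite -mulr_suml sbk -/S2.
  rewrite (eq_bigl (fun i => i \in [pred i | i != k])) // sumr_const cardk -[_ *+ n]mulr_natr.
  by field.
have pos : 0 < S2 - bk ^+ 2 / n%:R.
  rewrite -id lt_def sumr_ge0 ?andbT; last by move=> i _; exact: sqr_ge0.
  have : (1 < #|[pred i | i != k]|)%N by rewrite cardk.
  case/card_gt1P => i1 [i2 [h1 h2 h12]].
  apply/negP => /eqP h0.
  have F := psumr_eq0P (fun i _ => sqr_ge0 (b i + bk / n%:R)) h0.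
  have e1 := F i1 h1; have e2 := F i2 h2.
  move: e1 e2 => /eqP; rewrite sqrf_eq0 => /eqP e1 /eqP; rewrite sqrf_eq0 => /eqP e2.
  have : a i1 == a i2.
    apply/eqP; apply: (@addIr _ (- m + bk / n%:R)).
    by rewrite !addrA; rewrite /b in e1 e2; rewrite e1 e2.
  by rewrite (negbTE (inj _ _ h12)).
have S2ge : 0 <= S2 by rewrite sumr_ge0 // => i _; exact: sqr_ge0.
have npos : 0 < n%:R :> R by rewrite lt0r n0 ler0n.
have Vpos : 0 < bk ^+ 2 + S2.
  have h1 := sqr_ge0 bk.
  have h2 : 0 <= bk ^+ 2 / n%:R by rewrite divr_ge0 ?sqr_ge0 ?ler0n.
  lra.
have rpos : 0 < n%:R / Num.sqrt n.+1%:R :> R by rewrite divr_gt0 // sqrtr_gt0 ltr0n.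
case: (lerP bk 0) => hb.
  apply: le_lt_trans rpos.
  by rewrite mulr_le0_ge0 // invr_ge0 sqrtr_ge0.
rewrite -(ltr_pXn2r (n:=2)) // ?inE ?nnegrE; last 2 first.
- by rewrite divr_ge0 ?sqrtr_ge0 // ltW.
- exact: ltW.
rewrite !expr_div_n !sqr_sqrtr ?ler0n //; last first.
  by rewrite mulr_ge0 ?invr_ge0 ?ler0n // sV ltW.
rewrite sV -subr_gt0.
have -> : n%:R ^+ 2 / n.+1%:R - bk ^+ 2 / (n%:R^-1 * (bk ^+ 2 + S2)) =
   n%:R ^+ 2 * (S2 - bk ^+ 2 / n%:R) / (n.+1%:R * (bk ^+ 2 + S2)).
  by field; rewrite n0 (addrC 1) natr1 n10 gt_eqF.
by rewrite divr_gt0 // ?mulr_gt0 // ?exprn_gt0 // ltr0n.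
Qed.


Lemma quant_lt (R : realType) (n : nat) (alpha : R) (x : 'I_n -> \bar R) (b : R) :
  (1 <= n)%N -> 0 < alpha < 1 -> alpha^-1 - 1 <= n%:R ->
  (forall i, (x i < b%:E)%E) -> (conf_quantile alpha x < b%:E)%E.
Proof.
move=> n1 /andP[a0 a1] hn hx; rewrite /conf_quantile.
set l := [seq x i | i <- enum 'I_n].
have hs : sort (fun a b : \bar R => (a <= b)%O) (rcons l +oo%E) =
          rcons (sort (fun a b : \bar R => (a <= b)%O) l) +oo%E.
  apply: le_sorted_eq.
  - exact: (sort_sorted (@le_total _ (\bar R))).
  - have := sort_sorted (@le_total _ (\bar R)) l.
    case: (sort _ l) => [|y s] //= hs'.
    by rewrite rcons_path hs' leey.
  - by rewrite perm_sort perm_rcons perm_sym perm_rcons perm_cons perm_sort.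
set c := Num.ceil _.
have hN : 1 <= alpha * n.+1%:R.
  have : alpha^-1 <= n.+1%:R by rewrite -natr1; lra.
  by move=> h; rewrite -[X in X <= _](mulfV (lt0r_neq0 a0)) ler_pM2l.
have cle : c <= n%:Z.
  rewrite /c ceil_le_int.
  have -> : (n%:Z)%:~R = n%:R :> R by [].
  rewrite -natr1 in hN *; nra.
have c0 : 0 <= c.
  rewrite /c ceil_ge0. apply: (@lt_le_trans _ _ 0); first lra.
  by rewrite mulr_ge0 ?ler0n // subr_ge0 ltW.
have hk : (`|c|%N - 1 < n)%N.
  have : (`|c|%N <= n)%N.
    by rewrite -lez_nat abszE ger0_norm.
  by case: (`|c|%N) => [|m] h //=; rewrite subn1 /=.
rewrite hs nth_rcons size_sort size_map size_enum_ord hk.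
have : nth +oo%E (sort (fun a b : \bar R => (a <= b)%O) l) (`|c|%N - 1) \in l.
  by rewrite -(mem_sort (fun a b : \bar R => (a <= b)%O)) mem_nth // size_sort size_map size_enum_ord.
by case/mapP => i _ ->.
Qed.

Lemma Phi_lt (R : realType) (d : nat) (t mu sigma : 'I_d -> R) (b : R) :
  (forall j, (t j - mu j) / sigma j < b) -> (Phi t mu sigma < b%:E)%E.
Proof.
move=> h; rewrite /Phi; elim/big_ind: _ => //.
- exact: ltNyr.
- by move=> x y hx hy; rewrite gt_max hx hy.
- by move=> j _; rewrite lte_fin.
Qed.

Theorem lemma3p2 (dT : measure_display) (T : measurableType dT) (R : realType)
  (P : probability T R) (n d : nat) (alpha : R)
  (E : 'I_n.+1 -> 'I_d -> {RV P >-> R}) :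
  (2 <= n)%N -> (1 <= d)%N -> 0 < alpha < 1 ->
  exchangeable P (fun i j => E i j : T -> R) ->
  (* Assumption A *)
  (forall i j (x : R), P (E i j @^-1` [set x]) = 0%E) ->
  (forall i j, {ae P, forall w, 0 <= E i j w}) ->
  (forall i j, P.-integrable [set: T] (EFin \o E i j)) ->
  (forall i j, (0 < 'V_P[E i j : T -> R] < +oo)%E) ->
  (forall j, {ae P, forall w, forall i i' : 'I_n.+1, i != i' -> E i j w != E i' j w}) ->
  (* main hypothesis *)
  alpha^-1 - 1 <= n%:R ->
  {ae P, forall w,
      (Q_oracle alpha (fun i j => E i j : T -> R) w < (n%:R / Num.sqrt (n.+1%:R))%:E)%E}.

Proof.
move=> n2 d1 a01 _ _ _ _ _ hdist hn.
have H := filter_forall (ae_filter_ringOfSetsType P) hdist.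
apply: filterS H => w hw.
rewrite /Q_oracle; apply: quant_lt => //; first by apply: leq_trans n2.
move=> i; apply: Phi_lt => j.
rewrite /mu_oracle /sigma_oracle.
apply: (@key R n (fun i => E i j w)) => // i1 i2 h12.
exact: hw.
Qed.
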